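(* For every finite set $\Omega$ with $|\Omega|\ge2$ and every $\varepsilon>0$ there exist $\delta>0$ and $n_0>0$ such that for all $n>n_0$ and all $\mu,\nu\in\mathcal P(\Omega^n)$: if $D_\square(\mu,\nu)<\delta$ then $\mathcal D_1(\mathcal O_\mu,\mathcal O_\nu)<\varepsilon$.
   Context: $\mathcal P(\mathcal X)$ denotes the set of probability measures on a finite set $\mathcal X$, identified with the standard simplex with the total variation norm $\|p-q\|_{TV}=\frac12\sum_x|p(x)-q(x)|$; $\mathcal P^2(\mathcal X)$ is the set of probability measures on $\mathcal P(\mathcal X)$, and $\mathcal D_1$ denotes the Wasserstein $\ell_1$-distance on $\mathcal P^2(\mathcal X)$ (with respect to the total variation distance on $\mathcal P(\mathcal X)$). The overlap of $\sigma,\tau\in\Omega^n$ is the distribution $\rho_{\sigma,\tau}\in\mathcal P(\Omega\times\Omega)$, $\rho_{\sigma,\tau}(\omega,\omega')=\frac1n\sum_{i=1}^n\mathbf 1\{\sigma_i=\omega,\tau_i=\omega'\}$; the overlap $\mathcal O_\mu\in\mathcal P^2(\Omega\times\Omega)$ of $\mu\in\mathcal P(\Omega^n)$ is the law of $\rho_{\sigma,\tau}$ where $\sigma,\tau$ are independent samples from $\mu$. For $\mu,\nu\in\mathcal P(\Omega^n)$ let $\Gamma(\mu,\nu)$ be the set of couplings, i.e. probability measures $\gamma$ on $\Omega^n\times\Omega^n$ whose first and second marginals are $\mu$ and $\nu$. The cut metric is $D_\square(\mu,\nu)=\frac1n\min_{\gamma\in\Gamma(\mu,\nu)}\max_{I\subset[n],\,B\subset\Omega^n\times\Omega^n,\,\omega\in\Omega}\Big|\sum_{i\in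 I}\sum_{(\sigma,\tau)\in B}\gamma(\sigma,\tau)\big(\mathbf 1\{\sigma_i=\omega\}-\mathbf 1\{\tau_i=\omega\}\big)\Big|$. *)

(* Defs.v *)
From HB Require Import structures.
From Stdlib Require Import Reals.
From mathcomp Require Import all_boot.

Set Implicit Arguments.
Unset Strict Implicit.
Unset Printing Implicit Defensive.

(* Decidable equality on R (from the Stdlib Reals axioms), so that elements
   of P(X) (functions X -> R on a finite X) form an eqType. *)
Definition Reqb (x y : R) : bool := if Req_EM_T x y then true else false.
Lemma Reqb_axiom : Equality.axiom Reqb.
Proof. move=> x y; rewrite /Reqb; case: Req_EM_T => h; constructor => //. Qed.
HB.instance Definition _ := hasDecEq.Build R Reqb_axiom.

Local Open Scope R_scope.

Notation "\rsum_ ( i | P ) F" := (\big[Rplus/R0]_(i | P) F)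
  (at level 41, F at level 41, i at level 50).
Notation "\rsum_ ( i : T ) F" := (\big[Rplus/R0]_(i : T) F)
  (at level 41, F at level 41, i at level 50).
Notation "\rsum_ ( i <- s | P ) F" := (\big[Rplus/R0]_(i <- s | P) F)
  (at level 41, F at level 41, i at level 50).
Notation "\rsum_ ( i <- s ) F" := (\big[Rplus/R0]_(i <- s) F)
  (at level 41, F at level 41, i at level 50).

Definition ind (b : bool) : R := if b then 1 else 0.

Definition is_prob (T : finType) (mu : T -> R) : Prop :=
  (forall x, 0 <= mu x) /\ \rsum_(x : T) mu x = 1.

Definition PX (X : finType) := {ffun X -> R}.

Definition tv (X : finType) (p q : PX X) : R :=
  / 2 * \rsum_(x : X) Rabs (p x - q x).

Section Overlap.
Variables (Omega : finType) (n : nat).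
Definition config := (n.-tuple Omega)%type.

Definition overlap (sigma tau : config) : PX (prod Omega Omega) :=
  [ffun w => INR #|[pred i : 'I_n | (tnth sigma i == w.1) && (tnth tau i == w.2)]|
             / INR n].

(* Overlap law O_mu in P^2(Omega x Omega): the law of rho_{sigma,tau} for
   sigma, tau i.i.d. from mu.  It is finitely supported, represented by its
   mass function p |-> O_mu({p}). *)
Definition overlap_law (mu : config -> R) (p : PX (prod Omega Omega)) : R :=
  \rsum_(st | overlap st.1 st.2 == p) (mu st.1 * mu st.2).

Definition is_coupling (mu nu : config -> R) (g : config * config -> R) : Prop :=
  (forall st, 0 <= g st) /\
  (forall s, \rsum_(t : config) g (s, t) = mu s) /\
  (forall t, \rsum_(s : config) g (s, t) = nu t).

(* The quantity inside the max in the definition of the cut metric, divided by n. *)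
Definition cut_val (g : config * config -> R) (I : {set 'I_n})
  (B : {set config * config}) (w : Omega) : R :=
  / INR n * Rabs (\rsum_(i | i \in I) \rsum_(st | st \in B)
       g st * (ind (tnth st.1 i == w) - ind (tnth st.2 i == w))).

(* D_box(mu,nu) < delta.  Since D_box is a min over couplings of a max over
   the finitely many (I,B,omega), this holds iff some coupling makes every
   cut value < delta. *)
Definition cut_dist_lt (mu nu : config -> R) (delta : R) : Prop :=
  exists g, is_coupling mu nu g /\
    forall I B w, cut_val g I B w < delta.
End Overlap.

(* Couplings of two finitely supported measures m1, m2 on P(X): a finitely
   supported measure on P(X) x P(X), given as a list of weighted atoms
   ((p,q), weight), with nonnegative weights and marginals m1 and m2.
   (Every coupling of two finitely supported measures is supported on the
   product of the supports, hence finitely supported.) *)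
Definition is_coupling2 (X : finType) (m1 m2 : PX X -> R)
  (g : seq ((PX X * PX X) * R)) : Prop :=
  (forall k, List.In k g -> 0 <= k.2) /\
  (forall p, \rsum_(k <- g | k.1.1 == p) k.2 = m1 p) /\
  (forall q, \rsum_(k <- g | k.1.2 == q) k.2 = m2 q).

Definition coupling2_cost (X : finType) (g : seq ((PX X * PX X) * R)) : R :=
  \rsum_(k <- g) (k.2 * tv k.1.1 k.1.2).

(* D_1(m1,m2) < eps, where D_1 is the Wasserstein l1 distance (an infimum over
   couplings of the expected TV distance): some coupling has cost < eps. *)
Definition W1_lt (X : finType) (m1 m2 : PX X -> R) (eps : R) : Prop :=
  exists g, is_coupling2 m1 m2 g /\ coupling2_cost g < eps.

(* Main.v *)
From HB Require Import structures.
Require Import Defs.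
From Stdlib Require Import Reals Lra.
From mathcomp Require Import all_boot.
Set Implicit Arguments. Unset Strict Implicit. Unset Printing Implicit Defensive.
Local Open Scope R_scope.
Local Notation indb := Defs.ind.
Lemma RplusA : associative Rplus. Proof. move=>*; ring. Qed.
Lemma RmultA : associative Rmult. Proof. move=>*; ring. Qed.
HB.instance Definition _ := Monoid.isComLaw.Build R R0 Rplus RplusA Rplus_comm Rplus_0_l.
HB.instance Definition _ := Monoid.isComLaw.Build R R1 Rmult RmultA Rmult_comm Rmult_1_l.
HB.instance Definition _ := Monoid.isMulLaw.Build R R0 Rmult Rmult_0_l Rmult_0_r.
HB.instance Definition _ := Monoid.isAddLaw.Build R Rmult Rplus Rmult_plus_distr_r Rmult_plus_distr_l.

Lemma INR_sum (I : finType) (P : pred I) (F : I -> nat) :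
  INR (\sum_(i | P i) F i)%N = \rsum_(i | P i) INR (F i).
Proof. apply: (big_morph INR); [exact: plus_INR| done]. Qed.

Lemma sum_const (T : finType) (c : R) : \rsum_(i : T) c = INR #|T| * c.
Proof. idtac.
rewrite -sum1_card INR_sum big_distrl /=; apply: eq_bigr => i _; ring.
Qed.

Lemma card_ind (I : finType) (P : pred I) : INR #|[pred i | P i]| = \rsum_(i : I) indb (P i).
Proof. idtac.
rewrite -sum1_card INR_sum big_mkcond /=; apply: eq_bigr => i _.
by rewrite /Defs.ind inE; case: (P i).
Qed.

Lemma sum_le (I : finType) (F G : I -> R) : (forall i, F i <= G i) -> \rsum_(i:I) F i <= \rsum_(i:I) G i.
Proof. move=> h; apply: (big_ind2 (fun a b => a <= b)) => //; [lra | move=> *; lra]. Qed.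

Lemma sum_ge0 (I : finType) (F : I -> R) : (forall i, 0 <= F i) -> 0 <= \rsum_(i:I) F i.
Proof. move=> h; apply: (big_ind (fun a => 0 <= a)) => //; [lra | move=> *; lra]. Qed.
Definition posb (x : R) : bool := if Rle_dec 0 x then true else false.

Section Cut.
Variables (Omega : finType) (n : nat) (g : config Omega n * config Omega n -> R) (delta : R).
Hypothesis hn : (0 < n)%N.
Hypothesis gpos : forall st, 0 <= g st.
Hypothesis hcut : forall I B w, cut_val g I B w < delta.

Lemma cut_abs (I : {set 'I_n}) (w : Omega) :
  \rsum_(a : config Omega n * config Omega n) g a * Rabs (/ INR n *
     \rsum_(i : 'I_n) indb (i \in I) * (indb (tnth a.1 i == w) - indb (tnth a.2 i == w)))
  <= 2 * delta.
Proof.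
have npos : 0 < / INR n by apply: Rinv_0_lt_compat; apply: lt_0_INR; apply/ltP.
set Y := fun a : config Omega n * config Omega n =>
  \rsum_(i : 'I_n) indb (i \in I) * (indb (tnth a.1 i == w) - indb (tnth a.2 i == w)).
have hY : forall B : {set config Omega n * config Omega n}, \rsum_(a | a \in B) g a * Y a =
   \rsum_(i | i \in I) \rsum_(st | st \in B) g st *
       (indb (tnth st.1 i == w) - indb (tnth st.2 i == w)).
  move=> B; rewrite /Y.
  under eq_bigr do rewrite big_distrr.
  rewrite exchange_big /= [in RHS]big_mkcond /=; apply: eq_bigr => i _.
  case: (i \in I); rewrite /Defs.ind /=.
    by apply: eq_bigr => a _; rewrite Rmult_1_l.
  by rewrite big1 // => a _; rewrite Rmult_0_l Rmult_0_r.
have e1 : forall a, g a * Rabs (/ INR n * Y a) = / INR n * (g a * Rabs (Y a)).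
  move=> a; rewrite Rabs_mult (Rabs_pos_eq (/ INR n)); [ring | lra].
under eq_bigr do rewrite e1.
rewrite -big_distrr /=.
set B := [set a | posb (Y a)].
rewrite (bigID (fun a => a \in B)) /=.
have e2 : \rsum_(a | a \in B) g a * Rabs (Y a) = \rsum_(a | a \in B) g a * Y a.
  apply: eq_bigr => a; rewrite inE /posb; case: Rle_dec => // h _.
  by rewrite Rabs_pos_eq.
have e3 : \rsum_(a | a \notin B) g a * Rabs (Y a) = - \rsum_(a | a \in ~: B) g a * Y a.
  rewrite (big_morph Ropp Ropp_plus_distr Ropp_0).
  apply: eq_big => [a|a]; first by rewrite !inE.
  rewrite !inE /posb; case: Rle_dec => // h _.
  rewrite Rabs_left; [ring | lra].
rewrite e2 e3 !hY.
have h1 := hcut I B w; have h2 := hcut I (~: B) w.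
rewrite /cut_val in h1 h2.
set S1 := \rsum_(i | i \in I) _ in h1 *.
set S2 := \rsum_(i | i \in I) _ in h2 *.
have := Rle_abs S1; have := Rle_abs (- S2); rewrite Rabs_Ropp => a1 a2.
have : / INR n * (S1 + - S2) <= / INR n * Rabs S1 + / INR n * Rabs S2.
  rewrite -Rmult_plus_distr_l; apply: Rmult_le_compat_l; lra.
lra.
Qed.
End Cut.

Lemma pairE (T1 T2 : finType) (F : T1 * T2 -> R) :
  \rsum_(p : T1 * T2) F p = \rsum_(a : T1) \rsum_(b : T2) F (a, b).
Proof. rewrite pair_big; apply: eq_bigr => -[a b] _ //. Qed.

Lemma sumB (I : finType) (F G : I -> R) :
  \rsum_(i : I) (F i - G i) = \rsum_(i : I) F i - \rsum_(i : I) G i.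
Proof. rewrite /Rminus big_split /= (big_morph Ropp Ropp_plus_distr Ropp_0) //. Qed.

Lemma marg1 (C : finType) (g : C * C -> R) (mu : C -> R)
  (hg : forall s, \rsum_(t : C) g (s, t) = mu s) (h : C -> C -> R) :
  \rsum_(x : (C * C) * (C * C)) h x.1.1 x.2.1 * (g x.1 * g x.2) =
  \rsum_(y : C * C) h y.1 y.2 * (mu y.1 * mu y.2).
Proof.
rewrite [LHS]pairE [LHS]pairE [RHS]pairE /=.
apply: eq_bigr => s _.
under eq_bigr do rewrite pairE /=.
rewrite exchange_big /=; apply: eq_bigr => s' _.
rewrite -hg -hg big_distrl /= big_distrr /=; apply: eq_bigr => t _.
rewrite big_distrr /= big_distrr /=; apply: eq_bigr => t' _ /=.
ring.
Qed.

Lemma marg2 (C : finType) (g : C * C -> R) (nu : C -> R)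
  (hg : forall t, \rsum_(s : C) g (s, t) = nu t) (h : C -> C -> R) :
  \rsum_(x : (C * C) * (C * C)) h x.1.2 x.2.2 * (g x.1 * g x.2) =
  \rsum_(y : C * C) h y.1 y.2 * (nu y.1 * nu y.2).
Proof.
rewrite [LHS]pairE [LHS]pairE [RHS]pairE /=.
rewrite exchange_big /=; apply: eq_bigr => t _.
under eq_bigr do rewrite pairE /=.
under eq_bigr do rewrite exchange_big /=.
rewrite exchange_big /=; apply: eq_bigr => t' _.
rewrite -hg -hg big_distrl /= big_distrr /=; apply: eq_bigr => s _.
rewrite big_distrr /= big_distrr /=; apply: eq_bigr => s' _ /=.
ring.
Qed.

Lemma ov_eq (Omega : finType) (n : nat) (s s' : config Omega n) (w : Omega * Omega) :
  overlap s s' w = / INR n * \rsum_(i : 'I_n) indb (tnth s i == w.1) * indb (tnth s' i == w.2).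
Proof.
rewrite /overlap ffunE card_ind /Rdiv Rmult_comm; congr (_ * _).
apply: eq_bigr => i _; rewrite /Defs.ind.
by case: (_ == _); case: (_ == _); rewrite /= ?Rmult_1_l ?Rmult_0_l.
Qed.

Lemma in_map_ex (A B : Type) (f : A -> B) (l : seq A) k :
  List.In k (map f l) -> exists x, k = f x.
Proof. elim: l => //= x l IH [<-|/IH] //; by exists x. Qed.

Lemma gmass (C : finType) (g : C * C -> R) (mu : C -> R)
  (hg : forall s, \rsum_(t : C) g (s, t) = mu s) (hmu : \rsum_(s : C) mu s = 1) :
  \rsum_(a : C * C) g a = 1.
Proof. by rewrite pairE -hmu; apply: eq_bigr => s _; rewrite hg. Qed.

Section W.
Variables (Omega : finType) (n : nat) (g : config Omega n * config Omega n -> R) (delta : R).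
Hypothesis hn : (0 < n)%N.
Hypothesis gpos : forall st, 0 <= g st.
Hypothesis hcut : forall I B w, cut_val g I B w < delta.
Hypothesis hmass : \rsum_(a : config Omega n * config Omega n) g a = 1.

Lemma wbound (w : Omega * Omega) :
  \rsum_(x : (config Omega n * config Omega n) * (config Omega n * config Omega n))
     g x.1 * g x.2 * Rabs (overlap x.1.1 x.2.1 w - overlap x.1.2 x.2.2 w) <= 4 * delta.
Proof.
pose X1 (a b : config Omega n * config Omega n) := / INR n *
  \rsum_(i : 'I_n) indb (i \in [set j | tnth b.1 j == w.2]) *
     (indb (tnth a.1 i == w.1) - indb (tnth a.2 i == w.1)).
pose X2 (a b : config Omega n * config Omega n) := / INR n *
  \rsum_(i : 'I_n) indb (i \in [set j | tnth a.2 j == w.1]) *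
     (indb (tnth b.1 i == w.2) - indb (tnth b.2 i == w.2)).
have hD : forall a b, overlap a.1 b.1 w - overlap a.2 b.2 w = X1 a b + X2 a b.
  move=> a b; rewrite !ov_eq /X1 /X2 -Rmult_minus_distr_l -Rmult_plus_distr_l -sumB -big_split /=.
  congr (_ * _); apply: eq_bigr => i _; rewrite !inE /Defs.ind.
  by repeat case: (_ == _); simpl; ring.
have step : forall x : (config Omega n * config Omega n) * (config Omega n * config Omega n),
   g x.1 * g x.2 * Rabs (overlap x.1.1 x.2.1 w - overlap x.1.2 x.2.2 w) <=
   g x.1 * g x.2 * Rabs (X1 x.1 x.2) + g x.1 * g x.2 * Rabs (X2 x.1 x.2).
  move=> x; rewrite hD -Rmult_plus_distr_l; apply: Rmult_le_compat_l.
    by apply: Rmult_le_pos.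
  exact: Rabs_triang.
apply: Rle_trans; first by apply: sum_le; exact: step.
rewrite big_split /=.
have b1 : \rsum_(x : (config Omega n * config Omega n) * (config Omega n * config Omega n))
   g x.1 * g x.2 * Rabs (X1 x.1 x.2) <= 2 * delta.
  rewrite pairE /= exchange_big /=.
  apply: (Rle_trans _ (\rsum_(b : config Omega n * config Omega n) g b * (2 * delta))).
    apply: sum_le => b.
    have := cut_abs hn hcut [set j | tnth b.1 j == w.2] w.1.
    rewrite (_ : \rsum_(a : config Omega n * config Omega n) g a * g b * Rabs (X1 a b) =
       g b * \rsum_(a : config Omega n * config Omega n) g a * Rabs (X1 a b)).
      move=> h; apply: Rmult_le_compat_l => //.
    by rewrite big_distrr /=; apply: eq_bigr => a _; ring.
  rewrite -big_distrl /= hmass; lra.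
have b2 : \rsum_(x : (config Omega n * config Omega n) * (config Omega n * config Omega n))
   g x.1 * g x.2 * Rabs (X2 x.1 x.2) <= 2 * delta.
  rewrite pairE /=.
  apply: (Rle_trans _ (\rsum_(a : config Omega n * config Omega n) g a * (2 * delta))).
    apply: sum_le => a.
    have := cut_abs hn hcut [set j | tnth a.2 j == w.1] w.2.
    rewrite (_ : \rsum_(b : config Omega n * config Omega n) g a * g b * Rabs (X2 a b) =
       g a * \rsum_(b : config Omega n * config Omega n) g b * Rabs (X2 a b)).
      move=> h; apply: Rmult_le_compat_l => //.
    by rewrite big_distrr /=; apply: eq_bigr => b _; ring.
  rewrite -big_distrl /= hmass; lra.
apply: Rle_trans (Rplus_le_compat _ _ _ _ b1 b2) _; lra.
Qed.
End W.

Theorem corollary2p8 (Omega : finType) (hOmega : (2 <= #|Omega|)%N)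
  (eps : R) (heps : Rlt 0 eps) :
  exists (delta : R) (n0 : nat),
    Rlt 0 delta /\ (0 < n0)%N /\
    forall n : nat, (n0 < n)%N ->
    forall mu nu : n.-tuple Omega -> R,
      is_prob mu -> is_prob nu ->
      cut_dist_lt mu nu delta ->
      W1_lt (overlap_law mu) (overlap_law nu) eps.
Proof.
set N := INR #|{: Omega * Omega}|.
have Npos : 0 < N.
  rewrite /N; apply: lt_0_INR; apply/ltP; rewrite card_prod muln_gt0.
  by rewrite (leq_trans _ hOmega).
exists (eps / (4 * N)), 1%N; split.
  apply: Rdiv_lt_0_compat => //; lra.
split => // n hn mu nu [mupos musum] [nupos nusum] [g [[gpos [grow gcol]] hcut]].
have hn0 : (0 < n)%N by apply: ltn_trans hn.
have hmass := gmass grow musum.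
pose T := ((config Omega n * config Omega n) * (config Omega n * config Omega n))%type.
pose f := fun x : T => ((overlap x.1.1 x.2.1, overlap x.1.2 x.2.2), g x.1 * g x.2).
exists (map f (index_enum T)); split; [split; [|split]|].
- move=> k hk; have [x ->] := in_map_ex hk; exact: Rmult_le_pos.
- move=> p; rewrite big_map big_mkcond /=.
  rewrite (eq_bigr (fun x : T => indb (overlap x.1.1 x.2.1 == p) * (g x.1 * g x.2))); last first.
    by move=> x _; rewrite /Defs.ind; case: (_ == _); rewrite ?Rmult_1_l ?Rmult_0_l.
  apply: eq_trans (marg1 grow (fun s s2 => indb (overlap s s2 == p))) _; rewrite /overlap_law [RHS]big_mkcond /=; apply: eq_bigr => y _.
  by rewrite /Defs.ind; case: (_ == _); rewrite ?Rmult_1_l ?Rmult_0_l.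
- move=> p; rewrite big_map big_mkcond /=.
  rewrite (eq_bigr (fun x : T => indb (overlap x.1.2 x.2.2 == p) * (g x.1 * g x.2))); last first.
    by move=> x _; rewrite /Defs.ind; case: (_ == _); rewrite ?Rmult_1_l ?Rmult_0_l.
  apply: eq_trans (marg2 gcol (fun s s2 => indb (overlap s s2 == p))) _; rewrite /overlap_law [RHS]big_mkcond /=; apply: eq_bigr => y _.
  by rewrite /Defs.ind; case: (_ == _); rewrite ?Rmult_1_l ?Rmult_0_l.
- rewrite /coupling2_cost big_map /=.
  have e : forall x : T, g x.1 * g x.2 * tv (overlap x.1.1 x.2.1) (overlap x.1.2 x.2.2) =
     / 2 * \rsum_(w : Omega * Omega) g x.1 * g x.2 * Rabs (overlap x.1.1 x.2.1 w - overlap x.1.2 x.2.2 w).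
    move=> x; rewrite /tv big_distrr /= big_distrr /= big_distrr /=; apply: eq_bigr => w _; ring.
  rewrite (eq_bigr _ (fun x _ => e x)) -big_distrr /= exchange_big /=.
  have : \rsum_(w : Omega * Omega) \rsum_(x : T)
      g x.1 * g x.2 * Rabs (overlap x.1.1 x.2.1 w - overlap x.1.2 x.2.2 w)
      <= \rsum_(w : Omega * Omega) (4 * (eps / (4 * N))).
    apply: sum_le => w; exact: (wbound hn0 gpos hcut hmass w).
  rewrite sum_const -/N => h.
  have : N * (4 * (eps / (4 * N))) = eps by field; lra.
  move=> h2; rewrite h2 in h.
  apply: Rle_lt_trans (Rmult_le_compat_l (/ 2) _ _ _ h) _; lra.
Qed.
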